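(* Let $\{\xi_i;i\ge1\}$ be i.i.d. standard normal random variables and $S_k=\sum_{i=1}^k\xi_i^2$. Then $$P\left(\left|\frac{S_n}{S_m}-\frac{n}{m}\right|\ge x\right)\le 6\exp\left(-\frac{m^4x^2}{48n^3}\right)$$ for all integers $m\ge1$, $n\ge1$ and real $x>0$ satisfying $m\le n/2$ and $x\le n/m$. *)

(* Defs.v *)
From HB Require Import structures.
From mathcomp Require Import all_boot all_order all_algebra.
From mathcomp Require Import all_classical all_reals all_analysis.
Set Implicit Arguments. Unset Strict Implicit. Unset Printing Implicit Defensive.
Import Order.TTheory GRing.Theory Num.Theory.
Local Open Scope classical_set_scope.
Local Open Scope ring_scope.

Definition mutually_independent_RVs d (T : measurableType d) (R : realType)
  (P : probability T R) (X : nat -> {RV P >-> R}) : Prop :=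
  forall (s : seq nat) (B : nat -> set R),
    uniq s -> (forall i, measurable (B i)) ->
    P (\big[setI/setT]_(i <- s) (X i @^-1` B i)) =
      (\prod_(i <- s) P (X i @^-1` B i))%E.

Definition standard_normal_RV d (T : measurableType d) (R : realType)
  (P : probability T R) (X : {RV P >-> R}) : Prop :=
  forall A : set R, measurable A -> distribution P X A = normal_prob 0 1 A.

(* S_k = xi_1^2 + ... + xi_k^2, with the sequence xi_1, xi_2, ... stored as
   X 0, X 1, ... *)
Definition sum_sq d (T : measurableType d) (R : realType)
  (P : probability T R) (X : nat -> {RV P >-> R}) (k : nat) (w : T) : R :=
  \sum_(i < k) (X i w) ^+ 2.

(* Main.v *)
Require Import Defs.
From HB Require Import structures.
From mathcomp Require Import all_boot all_order all_algebra.
From mathcomp Require Import all_classical all_reals all_analysis.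
From mathcomp Require Import ring lra.
From mathcomp Require Import measurable_realfun lebesgue_integral lebesgue_measure measure probability normal_distribution exp numfun sequences ereal normedtype topology.
Import Order.TTheory GRing.Theory Num.Theory.
Local Open Scope classical_set_scope.
Local Open Scope ring_scope.
Import HBNNSimple.

Section dens.
Context {R : realType}.
Notation mu := (@lebesgue_measure R).
Variable nu : measure R R.
Hypothesis Hnu : forall A : set R, measurable A -> nu A = normal_prob 0 1 A.

Lemma measL (A : set R) : @measurable _ R A -> @measurable _ (measurableTypeR R) A.
Proof. exact: id. Qed.

Lemma mfunL (h : R -> R) :
  @measurable_fun _ _ R R setT h -> @measurable_fun _ _ (measurableTypeR R) R setT h.
Proof. exact: id. Qed.

Lemma normal_indic (A : set R) : measurable A ->
  (\int[nu]_y (\1_A y)%:E = \int[mu]_y (\1_A y * normal_pdf 0 1 y)%:E)%E.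
Proof.
move=> mA; rewrite integral_indic// setIT Hnu // /= /normal_prob [in LHS]integral_mkcond.
apply: eq_integral => y _; rewrite patchE indicE; case: ifPn => yA.
  by rewrite mul1r.
by rewrite mul0r.
Qed.

Lemma normal_nnsfun (f : {nnsfun R >-> R}) :
  (\int[nu]_y (f y)%:E = \int[mu]_y (f y * normal_pdf 0 1 y)%:E)%E.
Proof.
have mf1 r : @measurable _ (measurableTypeR R) (f @^-1` [set r]).
  by apply: measL; rewrite -[X in measurable X]setTI; exact: measurable_funP1.
under [LHS]eq_integral do rewrite fimfunE -fsumEFin//.
rewrite [LHS]ge0_integral_fsum//; last 2 first.
  - move=> r; apply/(measurable_EFinP _ (fun x => r * \1_(f @^-1` [set r]) x)).
    by apply: measurable_funM.
  - by move=> k y _; rewrite EFinM nnfun_muleindic_ge0.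
under [RHS]eq_integral.
  move=> y _; rewrite fimfunE mulr_fsuml -fsumEFin//.
  over.
rewrite [RHS]ge0_integral_fsum//; last 2 first.
  - move=> r; apply/(measurable_EFinP _ (fun x => r * \1_(f @^-1` [set r]) x * normal_pdf 0 1 x)).
    apply: measurable_funM; last exact: measurable_normal_pdf.
    apply: measurable_funM => //; exact: measurable_indic.
  - move=> k y _; rewrite lee_fin mulr_ge0 ?normal_pdf_ge0//.
    by rewrite -lee_fin EFinM nnfun_muleindic_ge0.
apply: eq_fsbigr => r; rewrite inE => -[z _ <-].
set A := f @^-1` [set f z].
have mA : measurable A by rewrite -[A]setTI; exact: measurable_funP1.
have f0 : (0 <= (f z)%:E)%E by rewrite lee_fin.
transitivity ((f z)%:E * \int[nu]_x (\1_A x)%:E)%E.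
  under eq_integral do rewrite EFinM.
  apply: ge0_integralZl => //; apply/(measurable_EFinP _ (\1_A : R -> R)); exact: measurable_indic.
rewrite normal_indic//.
under [RHS]eq_integral do rewrite -mulrA EFinM.
rewrite ge0_integralZl//.
- apply/(measurable_EFinP _ (fun x => \1_A x * normal_pdf 0 1 x)).
  apply: measurable_funM; last exact: measurable_normal_pdf.
  by apply: measurable_indic; exact: mf1.
- by move=> y _; rewrite lee_fin mulr_ge0 ?normal_pdf_ge0// indicE.
Qed.

Lemma normal_le (f : R -> R) : measurable_fun setT f -> (forall x, 0 <= f x) ->
  (\int[nu]_y (f y)%:E <= \int[mu]_y (f y * normal_pdf 0 1 y)%:E)%E.
Proof.
move=> mf f0.
have mf' : measurable_fun setT (EFin \o f) by apply/measurable_EFinP.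
have f0' : forall x, setT x -> (0 <= (EFin \o f) x)%E by move=> x _; rewrite lee_fin.
pose g := nnsfun_approx measurableT mf'.
have gf k y : g k y <= f y.
  by rewrite -lee_fin /g nnsfun_approxE; exact: (le_approx k f0').
have ndg y a b : (a <= b)%N -> g a y <= g b y.
  by move=> ab; exact/lefP/nd_nnsfun_approx.
have -> : (\int[nu]_y (f y)%:E = limn (fun k => \int[nu]_y (g k y)%:E))%E.
  rewrite -monotone_convergence//=.
  - apply: eq_integral => y _; apply/esym/cvg_lim => //=.
    exact: cvg_nnsfun_approx.
  - by move=> k; apply/(measurable_EFinP _ (g k)).
  - by move=> k y _; rewrite lee_fin.
  - by move=> y _ a b ab; rewrite lee_fin; exact: ndg.
apply: lime_le.
  apply/ereal_nondecreasing_is_cvgn => a b ab; apply: ge0_le_integral => //=.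
  - by move=> ? _; rewrite lee_fin.
  - by apply/(measurable_EFinP _ (g a)).
  - by apply/(measurable_EFinP _ (g b)).
  - by move=> y _; rewrite lee_fin; exact: ndg.
apply: nearW => k; rewrite normal_nnsfun.
apply: ge0_le_integral => //=.
- by move=> y _; rewrite lee_fin mulr_ge0// normal_pdf_ge0.
- apply/(measurable_EFinP _ (fun x => g k x * normal_pdf 0 1 x)).
  apply: measurable_funM; last exact: measurable_normal_pdf.
  apply: mfunL; exact: measurable_funPT.
- apply/(measurable_EFinP _ (fun x => f x * normal_pdf 0 1 x)).
  apply: measurable_funM; last exact: measurable_normal_pdf.
  exact: mfunL.
- by move=> y _; rewrite lee_fin ler_wpM2r ?normal_pdf_ge0.
Qed.
End dens.

Section mgf.
Context {R : realType}.
Notation mu := (@lebesgue_measure R).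

Lemma sigma_bound (s : R) : s <= 4^-1 ->
  (Num.sqrt (1 - 2 * s))^-1 <= expR (s + 4 * s ^+ 2).
Proof.
move=> s14.
have h12 : 0 < 1 - 2 * s.
  have s14' : s <= 1/4 by rewrite div1r.
  lra.
set c := Num.sqrt (1 - 2 * s).
have c0 : 0 < c by rewrite sqrtr_gt0.
have c2 : c ^+ 2 = 1 - 2 * s by rewrite sqr_sqrtr // ltW.
set e := expR (s + 4 * s ^+ 2).
have e0 : 0 < e by rewrite expR_gt0.
rewrite -div1r ler_pdivrMr // mulrC.
have H : 1 <= (c * e) ^+ 2.
  rewrite exprMn c2 expr2 -expRD.
  have := expR_ge1Dx (s + 4 * s ^+ 2 + (s + 4 * s ^+ 2)).
  have s14' : s <= 1/4 by rewrite div1r.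
  move=> He.
  apply: (le_trans _ (ler_wpM2l (ltW h12) He)).
  nra.
have ce0 : 0 <= c * e by rewrite mulr_ge0 // ltW.
move: H ce0; set z := c * e => H z0.
nra.
Qed.

Lemma normal_mgf (s : R) : s <= 4^-1 ->
  (\int[mu]_y (expR (s * y ^+ 2) * normal_pdf 0 1 y)%:E <= (expR (s + 4 * s ^+ 2))%:E)%E.
Proof.
move=> s14.
have h12 : 0 < 1 - 2 * s.
  have s14' : s <= 1/4 by rewrite div1r.
  lra.
set c := Num.sqrt (1 - 2 * s).
have c0 : 0 < c by rewrite sqrtr_gt0.
have c2 : c ^+ 2 = 1 - 2 * s by rewrite sqr_sqrtr // ltW.
set sg := c^-1.
have sg0 : 0 < sg by rewrite invr_gt0.
have key y : expR (s * y ^+ 2) * normal_pdf 0 1 y = sg * normal_pdf 0 sg y.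
  rewrite !normal_pdfE ?oner_eq0 ?gt_eqF //.
  rewrite /normal_peak /normal_fun !subr0 expr1n mul1r.
  rewrite exprVn c2.
  rewrite -mulrnAr sqrtrM ?invr_ge0 ?ltW // sqrtrV ?ltW // -/c invfM invrK.
  have -> : - y ^+ 2 / ((1 - 2 * s)^-1 *+ 2) = s * y ^+ 2 + (- y ^+ 2 / 2).
    rewrite -mulr_natr; field; lra.
  rewrite expRD /sg.
  field.
  by rewrite !gt_eqF // sqrtr_gt0 pmulrn_lgt0 // pi_gt0.
under eq_integral do rewrite key EFinM.
rewrite ge0_integralZl //; last 3 first.
- by apply/measurable_EFinP; exact: measurable_normal_pdf.
- by move=> y _; rewrite lee_fin normal_pdf_ge0.
- by rewrite lee_fin ltW.
rewrite integral_normal_pdf mule1 lee_fin.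
exact: sigma_bound.
Qed.
End mgf.

Import numFieldTopology.Exports numFieldNormedType.Exports.

Section indep.
Context {R : realType} {d : measure_display} {T : measurableType d}
  (P : probability T R) (X : nat -> {RV P >-> R}).
Hypothesis Xind : forall (s : seq nat) (B : nat -> set R),
    uniq s -> (forall i, measurable (B i)) ->
    P (\big[setI/setT]_(i <- s) (X i @^-1` B i)) =
      (\prod_(i <- s) P (X i @^-1` B i))%E.

Lemma indep_ord n (A : 'I_n -> set R) : (forall i, measurable (A i)) ->
  P (\big[setI/setT]_(i < n) (X i @^-1` A i)) = (\prod_(i < n) P (X i @^-1` A i))%E.
Proof.
move=> mA.
pose B k := oapp A setT (insub k).
have mB k : measurable (B k) by rewrite /B; case: insub => //=.
have := @Xind (iota 0 n) B (iota_uniq 0 n) mB.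
have -> : iota 0 n = index_iota 0 n by rewrite /index_iota subn0.
have EB (i : 'I_n) : B i = A i by rewrite /B valK.
rewrite !big_mkord => H.
transitivity (P (\big[setI/setT]_(i < n) (X i @^-1` B i))).
  by congr (P _); apply: eq_bigr => i _; rewrite EB.
by rewrite H; apply: eq_bigr => i _; rewrite EB.
Qed.

Lemma prod_indic (I : Type) (r : seq I) (C : I -> set T) w :
  \prod_(i <- r) (\1_(C i) w : R) = \1_(\big[setI/setT]_(i <- r) C i) w.
Proof.
elim: r => [|i r IH]; first by rewrite !big_nil indicT.
by rewrite !big_cons IH indicI.
Qed.


Definition rg (g : {nnsfun R >-> R}) : seq R := finmap.enum_fset (fset_set (range g)).

Lemma rg_ge0 (g : {nnsfun R >-> R}) j : 0 <= (rg g)`_j.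
Proof.
case: (ltnP j (size (rg g))) => hj; last by rewrite nth_default.
have := mem_nth 0 hj; rewrite /rg in_fset_set; last exact: fimfunP.
by rewrite inE => -[y _ <-]; exact: fun_ge0.
Qed.

Lemma simple_decomp (g : {nnsfun R >-> R}) K : (size (rg g) <= K)%N -> forall y,
  g y = \sum_(j < K) (rg g)`_j * \1_(g @^-1` [set (rg g)`_j]) y.
Proof.
move=> hK y; rewrite {1}(fimfunEord g y) -/(rg g) (big_ord_widen _ (fun j => (rg g)`_j * \1_(g @^-1` [set (rg g)`_j]) y) hK) big_mkcond.
apply: eq_bigr => j _; case: ifP => // /negbT; rewrite -leqNgt => hj.
by rewrite nth_default // mul0r.
Qed.

Lemma mpre i (B : set R) : measurable B -> measurable (X i @^-1` B).
Proof. exact: measurable_funPTI. Qed.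

Lemma mpre1 (g : {nnsfun R >-> R}) r : measurable (g @^-1` [set r]).
Proof. by rewrite -[X in measurable X]setTI; exact: measurable_funP1. Qed.

Lemma expect_simple i (g : {nnsfun R >-> R}) K : (size (rg g) <= K)%N ->
  (\int[P]_w (g (X i w))%:E =
   (\sum_(j < K) (rg g)`_j * fine (P (X i @^-1` (g @^-1` [set (rg g)`_j]))))%:E)%E.
Proof.
move=> hK.
under eq_integral => w _ do rewrite (@simple_decomp g K hK (X i w)) -sumEFin.
rewrite ge0_integral_sum //; last 2 first.
- move=> j; apply/(measurable_EFinP _ (fun w => (rg g)`_j * \1_(g @^-1` [set (rg g)`_j]) (X i w))).
  apply: measurable_funM => //; by apply: measurableT_comp.
- by move=> j w _; rewrite lee_fin mulr_ge0 ?rg_ge0.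
rewrite -sumEFin; apply: eq_bigr => j _.
set B := g @^-1` [set (rg g)`_j].
have mB : measurable B by exact: mpre1.
have E w : \1_B (X i w) = \1_(X i @^-1` B) w :> R by [].
under eq_integral do rewrite E EFinM.
rewrite ge0_integralZl //; last 2 first.
- apply/(measurable_EFinP _ (\1_(X i @^-1` B) : T -> R)).
  by apply: measurable_indic; exact: mpre.
- by rewrite lee_fin rg_ge0.
rewrite integral_indic //; last exact: mpre.
by rewrite setIT EFinM fineK // fin_num_measure //; exact: mpre.
Qed.


Lemma indep_simple n (g : nat -> {nnsfun R >-> R}) :
  exists e : nat -> R, (forall i, (e i)%:E = \int[P]_w (g i (X i w))%:E)%E /\
    (\int[P]_w (\prod_(i < n) g i (X i w))%:E = (\prod_(i < n) e i)%:E)%E.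
Proof.
pose K := (\max_(i < n) size (rg (g i)))%N.
pose a i j := (rg (g i))`_j.
pose C i j := X i @^-1` (g i @^-1` [set a i j]).
pose p i j := fine (P (C i j)).
have hK (i : 'I_n) : (size (rg (g i)) <= K)%N.
  exact: (@leq_bigmax _ (fun i : 'I_n => size (rg (g i))) i).
exists (fun i => \sum_(j < size (rg (g i))) a i j * p i j); split.
  by move=> i; rewrite (@expect_simple i (g i) _ (leqnn _)).
have eK (i : 'I_n) : \sum_(j < size (rg (g i))) a i j * p i j = \sum_(j < K) a i j * p i j.
  by apply: EFin_inj; rewrite -(@expect_simple i (g i) _ (leqnn _)) (@expect_simple i (g i) _ (hK i)).
rewrite (eq_bigr _ (fun i _ => eK i)).
have mD (f : {ffun 'I_n -> 'I_K}) : measurable (\big[setI/setT]_(i < n) C i (f i)).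
  apply: big_ind => //; first exact: measurableI.
  by move=> i _; apply: mpre; exact: mpre1.
have pw w : \prod_(i < n) g i (X i w) = \sum_(f : {ffun 'I_n -> 'I_K})
    (\prod_(i < n) a i (f i)) * \1_(\big[setI/setT]_(i < n) C i (f i)) w.
  rewrite (eq_bigr (fun i : 'I_n => \sum_(j < K) a i j * \1_(C i j) w)); last first.
    by move=> i _; rewrite (@simple_decomp (g i) K (hK i)).
  by rewrite bigA_distr_bigA; apply: eq_bigr => f _; rewrite big_split /= prod_indic.
under eq_integral do rewrite pw -sumEFin.
rewrite ge0_integral_sum //; last 2 first.
- move=> f; apply/(measurable_EFinP _ (fun w => (\prod_(i < n) a i (f i)) * \1_(\big[setI/setT]_(i < n) C i (f i)) w)).
  by apply: measurable_funM => //; apply: measurable_indic.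
- by move=> f w _; rewrite lee_fin mulr_ge0 // prodr_ge0 // => i _; exact: rg_ge0.
rewrite bigA_distr_bigA -sumEFin; apply: eq_bigr => f _.
under eq_integral do rewrite EFinM.
rewrite ge0_integralZl //; last 2 first.
- apply/(measurable_EFinP _ (\1_(\big[setI/setT]_(i < n) C i (f i)) : T -> R)).
  exact: measurable_indic.
- by rewrite lee_fin prodr_ge0 // => i _; exact: rg_ge0.
rewrite integral_indic // setIT.
rewrite [X in (_ * X)%E](_ : _ = \prod_(i < n) P (C i (f i)))%E; last first.
  by apply: (@indep_ord n (fun i => g i @^-1` [set a i (f i)])) => i; exact: mpre1.
rewrite (eq_bigr (fun i : 'I_n => (p i (f i))%:E)); last first.
  by move=> i _; rewrite /p fineK // fin_num_measure //; apply: mpre; exact: mpre1.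
by rewrite prodEFin -EFinM big_split.
Qed.


Lemma indep_le n (f : nat -> R -> R) (b : nat -> R) :
  (forall i, measurable_fun setT (f i)) -> (forall i y, 0 <= f i y) ->
  (forall i, (\int[P]_w (f i (X i w))%:E <= (b i)%:E)%E) ->
  (\int[P]_w (\prod_(i < n) f i (X i w))%:E <= (\prod_(i < n) b i)%:E)%E.
Proof.
move=> mf f0 fb.
have mf' i : measurable_fun setT (EFin \o f i) by apply/measurable_EFinP.
have f0' i : forall y, setT y -> (0 <= (EFin \o f i) y)%E by move=> y _; rewrite lee_fin.
pose g k i := nnsfun_approx measurableT (mf' i) k.
have gf k i y : g k i y <= f i y.
  by rewrite -lee_fin /g nnsfun_approxE; exact: (le_approx k (f0' i)).
have g0 k i y : 0 <= g k i y by exact: fun_ge0.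
have ndg i y a c : (a <= c)%N -> g a i y <= g c i y.
  by move=> ac; exact/lefP/nd_nnsfun_approx.
have cvgg i y : g k i y @[k --> \oo] --> f i y.
  have -> : (fun k => g k i y) = (fun k => approx setT (EFin \o f i) k y).
    by apply/funext => k; rewrite /g nnsfun_approxE.
  exact: (@cvg_approx _ _ R setT (EFin \o f i) y (f0' i) I (ltry _)).
have hcvg m w : \prod_(i < m) g k i (X i w) @[k --> \oo] --> \prod_(i < m) f i (X i w).
  elim: m => [|m IH].
    rewrite big_ord0; under eq_fun do rewrite big_ord0; exact: cvg_cst.
  rewrite big_ord_recr /=; under eq_fun do rewrite big_ord_recr /=.
  by apply: cvgM => //; exact: cvgg.
have mh k : measurable_fun setT (fun w => \prod_(i < n) g k i (X i w)).
  apply: measurable_prod => i _; exact: measurableT_comp.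
have ndh w a c : (a <= c)%N -> \prod_(i < n) g a i (X i w) <= \prod_(i < n) g c i (X i w).
  by move=> ac; apply: ler_prod => i _; rewrite g0 ndg.
have -> : (\int[P]_w (\prod_(i < n) f i (X i w))%:E =
    limn (fun k => \int[P]_w (\prod_(i < n) g k i (X i w))%:E))%E.
  rewrite -monotone_convergence//=.
  - apply: eq_integral => w _; apply/esym/cvg_lim => //=.
    exact: (cvg_comp _ _ (hcvg n w)).
  - by move=> k; apply/(measurable_EFinP _ (fun w => \prod_(i < n) g k i (X i w))).
  - by move=> k w _; rewrite lee_fin prodr_ge0.
  - by move=> w _ a c ac; rewrite lee_fin; exact: ndh.
apply: lime_le.
  apply/ereal_nondecreasing_is_cvgn => a c ac; apply: ge0_le_integral => //=.
  - by move=> w _; rewrite lee_fin prodr_ge0.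
  - by apply/(measurable_EFinP _ (fun w => \prod_(i < n) g a i (X i w))).
  - by apply/(measurable_EFinP _ (fun w => \prod_(i < n) g c i (X i w))).
  - by move=> w _; rewrite lee_fin; exact: ndh.
apply: nearW => k.
have [e [eE ->]] := indep_simple n (g k).
rewrite lee_fin; apply: ler_prod => i _.
have e0 : 0 <= e i.
  by rewrite -lee_fin eE; apply: integral_ge0 => w _; rewrite lee_fin.
rewrite e0 -lee_fin eE; apply: le_trans (fb i).
apply: ge0_le_integral => //=.
- by move=> w _; rewrite lee_fin.
- apply/(measurable_EFinP _ (fun w => g k i (X i w))); exact: measurableT_comp.
- apply/(measurable_EFinP _ (fun w => f i (X i w))); exact: measurableT_comp.
- by move=> w _; rewrite lee_fin.
Qed.

End indep.

Lemma expect_normal (R : realType) (d : measure_display) (T : measurableType d)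
  (P : probability T R) (Y : {RV P >-> R}) (s : R) :
  standard_normal_RV Y -> s <= 4^-1 ->
  (\int[P]_w (expR (s * Y w ^+ 2))%:E <= (expR (s + 4 * s ^+ 2))%:E)%E.
Proof.
move=> YN s14.
have mh : measurable_fun setT (fun y : R => expR (s * y ^+ 2)).
  apply: measurableT_comp; first exact: measurable_expR.
  by apply: measurable_funM => //; exact: measurable_funX.
rewrite -[X in (X <= _)%E](@ge0_integral_distribution _ _ _ _ _ _ Y (fun y => (expR (s * y ^+ 2))%:E)); last 2 first.
- by apply/measurable_EFinP.
- by move=> y; rewrite lee_fin expR_ge0.
apply: (le_trans _ (@normal_mgf R s s14)).
apply: (@normal_le R (distribution P Y) YN) => //.
Qed.

Lemma sum_ite (R : realType) (m n : nat) (a b : R) (z : nat -> R) : (m <= n)%N ->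
  \sum_(i < n) (if (i < m)%N then a else b) * z i =
  a * \sum_(i < m) z i + b * (\sum_(i < n) z i - \sum_(i < m) z i).
Proof.
move=> mn.
have E1 : \sum_(i < m) z i = \sum_(i < n | (i < m)%N) z i by exact: big_ord_widen.
have E2 := bigID (fun i : 'I_n => (i < m)%N) xpredT (fun i : 'I_n => z i).
rewrite E1 E2 /= addrC addrK.
rewrite (bigID (fun i : 'I_n => (i < m)%N)) /=.
rewrite !mulr_sumr; congr (_ + _); apply: eq_bigr => i; first by move=> ->.
by move/negbTE => ->.
Qed.

Lemma sum_ite_f (R : realType) (m n : nat) (a b : R) (F : R -> R) : (m <= n)%N ->
  \sum_(i < n) F (if (i < m)%N then a else b) = m%:R * F a + (n - m)%:R * F b.
Proof.
move=> mn.
transitivity (\sum_(i < n) (if (i < m)%N then F a else F b) * (fun _ => 1) i).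
  by apply: eq_bigr => i _; case: ifP; rewrite mulr1.
rewrite (@sum_ite R m n (F a) (F b) (fun _ => 1) mn) !sumr_const !card_ord natrB //.
rewrite -[_ *+ n]mulr_natl -[_ *+ m]mulr_natl !mulr1; ring.
Qed.

Lemma arith (R : realType) (M N x a b t : R) : 1 <= M -> 2 * M <= N -> 0 < x -> x * M <= N ->
  M * a + (N - M) * b = - (x * M ^+ 2) -> a ^+ 2 <= 4 * N ^+ 2 -> b ^+ 2 <= M ^+ 2 ->
  t = x * M / (40 * N ^+ 2) ->
  M * (t * a + 4 * (t * a) ^+ 2) + (N - M) * (t * b + 4 * (t * b) ^+ 2)
  <= - (M ^+ 4 * x ^+ 2 / (48 * N ^+ 3)).
Proof.
move=> M1 MN x0 xMN hsum ha hb tE.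
have N0 : 0 < N by lra.
have t0 : 0 <= t.
  rewrite tE divr_ge0 //; first by rewrite mulr_ge0 //; lra.
  by rewrite mulr_ge0 // exprn_ge0 //; lra.
have Q : M * a ^+ 2 + (N - M) * b ^+ 2 <= 5 * M * N ^+ 2.
  have h1 : M * a ^+ 2 <= M * (4 * N ^+ 2) by rewrite ler_wpM2l //; lra.
  have h2 : (N - M) * b ^+ 2 <= N * (M * M).
    apply: (le_trans (ler_wpM2l _ hb)); first lra.
    rewrite expr2.
    have : 0 <= M * (M * M) by rewrite !mulr_ge0 //; lra.
    lra.
  have h3 : N * (M * M) <= M * N ^+ 2.
    have : 0 <= M * N * (N - M) by rewrite !mulr_ge0 //; lra.
    rewrite expr2; lra.
  lra.
have -> : M * (t * a + 4 * (t * a) ^+ 2) + (N - M) * (t * b + 4 * (t * b) ^+ 2)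
   = t * (M * a + (N - M) * b) + 4 * t ^+ 2 * (M * a ^+ 2 + (N - M) * b ^+ 2) by ring.
rewrite hsum.
have step : t * - (x * M ^+ 2) + 4 * t ^+ 2 * (M * a ^+ 2 + (N - M) * b ^+ 2)
   <= t * - (x * M ^+ 2) + 4 * t ^+ 2 * (5 * M * N ^+ 2).
  by rewrite lerD2l ler_wpM2l // mulr_ge0 // exprn_ge0.
apply: (le_trans step).
have -> : t * - (x * M ^+ 2) + 4 * t ^+ 2 * (5 * M * N ^+ 2) = - (x ^+ 2 * M ^+ 3 / (80 * N ^+ 2)).
  rewrite tE; field; lra.
rewrite lerN2.
have -> : M ^+ 4 * x ^+ 2 / (48 * N ^+ 3) = (x ^+ 2 * M ^+ 3 / (80 * N ^+ 2)) * (80 * M / (48 * N)).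
  field; lra.
apply: ler_piMr.
  by rewrite divr_ge0 // ?mulr_ge0 ?exprn_ge0 // ?ltW //; lra.
rewrite ler_pdivrMr; last lra.
lra.
Qed.

Lemma chernoff (R : realType) (d : measure_display) (T : measurableType d)
  (P : probability T R) (X : nat -> {RV P >-> R})
  (Xind : mutually_independent_RVs X)
  (Xnorm : forall i, standard_normal_RV (X i))
  (n : nat) (c : nat -> R) (t : R) : 0 <= t -> (forall i, t * c i <= 4^-1) ->
  measurable [set w | 0 <= \sum_(i < n) c i * X i w ^+ 2] /\
  (P [set w | (0 <= \sum_(i < n) c i * X i w ^+ 2)%R] <=
    (expR (\sum_(i < n) (t * c i + 4 * (t * c i) ^+ 2)))%:E)%E.
Proof.
move=> t0 tc.
set Y := fun w : T => (\sum_(i < n) c i * X i w ^+ 2)%R.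
have mY : measurable_fun setT Y.
  apply: measurable_sum => i; apply: measurable_funM => //.
  exact: measurable_funX.
have mA : measurable [set w | 0 <= Y w].
  have := mY measurableT _ (measurable_itv `[0, +oo[); rewrite setTI.
  have -> : Y @^-1` `[0, +oo[%classic = [set w | 0 <= Y w].
    by apply/seteqP; split => w /=; rewrite in_itv /= andbT.
  by [].
split => //.
rewrite -[X in P X]setIT -integral_indic //.
have fb i : (\int[P]_w (expR (t * c i * X i w ^+ 2))%:E <= (expR (t * c i + 4 * (t * c i) ^+ 2))%:E)%E.
  exact: expect_normal.
have mf i : measurable_fun setT (fun y : R => expR (t * c i * y ^+ 2)).
  apply: measurableT_comp; first exact: measurable_expR.
  by apply: measurable_funM => //; exact: measurable_funX.
have f0 i y : 0 <= expR (t * c i * y ^+ 2) by exact: expR_ge0.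
have H := @indep_le R d T P X Xind n (fun i y => expR (t * c i * y ^+ 2))
   (fun i => expR (t * c i + 4 * (t * c i) ^+ 2)) mf f0 fb.
rewrite expR_sum; apply: le_trans H.
apply: ge0_le_integral => //=.
- apply/(measurable_EFinP _ (\1_[set w | 0 <= Y w] : T -> R)).
  exact: measurable_indic.
- apply/(measurable_EFinP _ (fun w => \prod_(i < n) expR (t * c i * X i w ^+ 2))).
  apply: measurable_prod => i _; apply: measurableT_comp; first exact: measurable_expR.
  by apply: measurable_funM => //; exact: measurable_funX.
move=> w _; rewrite lee_fin -expR_sum indicE.
case: (boolP (w \in _)) => [|_]; last by rewrite expR_ge0.
rewrite inE /= => Yw.
apply: le_trans (expR_ge1Dx _); rewrite lerDl.
rewrite (eq_bigr (fun i : 'I_n => t * (c i * X i w ^+ 2))); last by move=> i _; rewrite mulrA.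
by rewrite -mulr_sumr mulr_ge0.
Qed.

Lemma sq_bound (R : realType) (u v : R) : - v <= u -> u <= v -> u ^+ 2 <= v ^+ 2.
Proof.
move=> h1 h2.
have : 0 <= (v - u) * (v + u) by apply: mulr_ge0; lra.
rewrite !expr2; nra.
Qed.

Theorem lemma4p2 (R : realType) (d : measure_display) (T : measurableType d)
  (P : probability T R) (X : nat -> {RV P >-> R})
  (Xind : mutually_independent_RVs X)
  (Xnorm : forall i, standard_normal_RV (X i))
  (m n : nat) (x : R) :
  (1 <= m)%N -> (1 <= n)%N -> 0 < x -> (m%:R <= n%:R / 2 :> R) ->
  x <= n%:R / m%:R ->
  (P [set w | (x <= `| sum_sq X n w / sum_sq X m w - n%:R / m%:R |)%R]
   <= (6 * expR (- ((m%:R) ^+ 4 * x ^+ 2 / (48 * (n%:R) ^+ 3))))%:E)%E.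
Proof.
move=> m1 n1 x0 mn xnm.
have M1 : 1 <= m%:R :> R by rewrite ler1n.
have MN2 : 2 * m%:R <= n%:R :> R by lra.
have N0 : 0 < n%:R :> R by lra.
have M0 : 0 < m%:R :> R by lra.
have mlen : (m <= n)%N by rewrite -(ler_nat R); lra.
have xMN : x * m%:R <= n%:R :> R by rewrite -ler_pdivlMr.
move: mn xnm M1 MN2 N0 M0 xMN.
set M : R := m%:R; set N : R := n%:R => mn xnm M1 MN2 N0 M0 xMN.
pose a1 := M - N - x * M; pose b1 := M.
pose a2 := N - x * M - M; pose b2 := - M.
pose c1 i := if (i < m)%N then a1 else b1.
pose c2 i := if (i < m)%N then a2 else b2.
pose t := x * M / (40 * N ^+ 2).
have t0 : 0 <= t.
  rewrite /t divr_ge0 //; first by rewrite mulr_ge0 //; lra.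
  by rewrite mulr_ge0 // exprn_ge0 //; lra.
have tN : t * N <= 4^-1.
  have -> : t * N = x * M / (40 * N) by rewrite /t; field; lra.
  rewrite ler_pdivrMr; last lra.
  lra.
have tc (c : R) : c <= N -> t * c <= 4^-1.
  by move=> cN; apply: le_trans tN; rewrite ler_wpM2l.
have tc1 i : t * c1 i <= 4^-1.
  by apply: tc; rewrite /c1; case: ifP => _; rewrite /a1 /b1; nra.
have tc2 i : t * c2 i <= 4^-1.
  by apply: tc; rewrite /c2; case: ifP => _; rewrite /a2 /b2; nra.
have [mA1 P1] := @chernoff R d T P X Xind Xnorm n c1 t t0 tc1.
have [mA2 P2] := @chernoff R d T P X Xind Xnorm n c2 t t0 tc2.
have key w : (x <= `| sum_sq X n w / sum_sq X m w - N / M |) <->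
    (0 <= \sum_(i < n) c1 i * X i w ^+ 2) \/ (0 <= \sum_(i < n) c2 i * X i w ^+ 2).
  set Sn := sum_sq X n w; set Sm := sum_sq X m w.
  have Y1E : \sum_(i < n) c1 i * X i w ^+ 2 = M * Sn - (N + x * M) * Sm.
    rewrite (@sum_ite R m n a1 b1 (fun i => X i w ^+ 2) mlen) /Sn /Sm /sum_sq /a1 /b1.
    ring.
  have Y2E : \sum_(i < n) c2 i * X i w ^+ 2 = (N - x * M) * Sm - M * Sn.
    rewrite (@sum_ite R m n a2 b2 (fun i => X i w ^+ 2) mlen) /Sn /Sm /sum_sq /a2 /b2.
    ring.
  have Sn0 : 0 <= Sn by apply: sumr_ge0 => i _; exact: sqr_ge0.
  have Sm0 : 0 <= Sm by apply: sumr_ge0 => i _; exact: sqr_ge0.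
  rewrite Y1E Y2E.
  move: Sm0; rewrite le_eqVlt => /orP [/eqP Sm_eq0 | Sm_gt0].
    rewrite -Sm_eq0 invr0 mulr0 sub0r normrN ger0_norm; last first.
      by rewrite divr_ge0 // ltW.
    split=> _ //; left; rewrite mulr0 subr0; exact: mulr_ge0 (ltW M0) Sn0.
  have MSm : 0 < M * Sm by rewrite mulr_gt0.
  rewrite (_ : Sn / Sm - N / M = (M * Sn - N * Sm) / (M * Sm)); last first.
    by field; apply/andP; split; rewrite gt_eqF.
  have E1 : (x <= (M * Sn - N * Sm) / (M * Sm)) = (x * (M * Sm) <= M * Sn - N * Sm).
    by rewrite ler_pdivlMr.
  have E2 : (x <= - ((M * Sn - N * Sm) / (M * Sm))) = (x * (M * Sm) <= - (M * Sn - N * Sm)).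
    by rewrite -mulNr ler_pdivlMr.
  rewrite ler_normr E1 E2.
  split.
    by move=> /orP [h|h]; [left|right]; lra.
  by move=> [h|h]; apply/orP; [left|right]; lra.
have Eset : [set w | x <= `| sum_sq X n w / sum_sq X m w - N / M |] =
    [set w | 0 <= \sum_(i < n) c1 i * X i w ^+ 2] `|`
    [set w | 0 <= \sum_(i < n) c2 i * X i w ^+ 2].
  by apply/seteqP; split => w /= /key.
rewrite Eset; apply: le_trans (measureU2 _ mA1 mA2) _.
apply: le_trans (leeD P1 P2) _.
rewrite -EFinD lee_fin.
set K := - (M ^+ 4 * x ^+ 2 / (48 * N ^+ 3)).
have F1 : \sum_(i < n) (t * c1 i + 4 * (t * c1 i) ^+ 2) <= K.
  rewrite (@sum_ite_f R m n a1 b1 (fun c => t * c + 4 * (t * c) ^+ 2) mlen) natrB // -/M -/N.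
  apply: arith => //.
  - by rewrite /a1 /b1; ring.
  - rewrite (_ : 4 * N ^+ 2 = (2 * N) ^+ 2); last by ring.
    have h1 : - (2 * N) <= a1 by rewrite /a1; nra.
    have h2 : a1 <= 2 * N by rewrite /a1; nra.
    exact: sq_bound h1 h2.
have F2 : \sum_(i < n) (t * c2 i + 4 * (t * c2 i) ^+ 2) <= K.
  rewrite (@sum_ite_f R m n a2 b2 (fun c => t * c + 4 * (t * c) ^+ 2) mlen) natrB // -/M -/N.
  apply: arith => //.
  - by rewrite /a2 /b2; ring.
  - rewrite (_ : 4 * N ^+ 2 = (2 * N) ^+ 2); last by ring.
    have h1 : - (2 * N) <= a2 by rewrite /a2; nra.
    have h2 : a2 <= 2 * N by rewrite /a2; nra.
    exact: sq_bound h1 h2.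
  - by rewrite /b2 sqrrN.
have eK := expR_ge0 K.
rewrite -ler_expR in F1; rewrite -ler_expR in F2.
lra.
Qed.
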